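(* Let $n\ge 1$ and $m\ge 2$ be integers with $m\nmid n$, and let $k$ be a nonnegative integer. If $mk>n$, then $\theta_{m,k}=\mathbf{0}$, i.e. $\theta_{m,k}(x)=(0,\dots,0)$ for every $x\in\mathbb{F}_2^n$.
   Context: For $x=(x_0,\dots,x_{n-1})\in\mathbb{F}_2^n$, indices of coordinates are taken modulo $n$. For a nonnegative integer $k$, the map $\theta_{m,k}\colon\mathbb{F}_2^n\to\mathbb{F}_2^n$ is defined by $\theta_{m,k}(x)=y$ with $y_i=x_{i+mk}\prod_{1\le j\le mk-1,\ m\nmid j}(x_{i+j}+1)$ for $i\in\{0,\dots,n-1\}$ (for $k=0$ the empty product is $1$, so $\theta_{m,0}$ is the identity map). *)

(* Defs.v *)
From mathcomp Require Import all_boot.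
Set Implicit Arguments. Unset Strict Implicit. Unset Printing Implicit Defensive.

(* F_2 is modelled by bool: addition = xor (addb), multiplication = andb,
   and (a + 1) = ~~ a. A vector of F_2^n is an n.-tuple bool. *)

Definition coord (n : nat) (x : n.-tuple bool) (k : nat) : bool :=
  nth false x (k %% n).

Definition theta (n m k : nat) (x : n.-tuple bool) : n.-tuple bool :=
  [tuple of mkseq (fun i =>
     coord x (i + m * k) &&
     \big[andb/true]_(1 <= j < m * k | ~~ (m %| j)) (~~ coord x (i + j))) n].

(* Main.v *)
Require Import Defs.
From mathcomp Require Import all_boot.

Theorem lemma1 (n m k : nat) :
  1 <= n -> 2 <= m -> ~~ (m %| n) -> n < m * k ->
  forall x : n.-tuple bool, theta m k x = nseq_tuple n false.
Proof.
move=> n1 m2 mn nmk x; apply: val_inj => /=.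
apply: (@eq_from_nth _ false); first by rewrite size_mkseq size_nseq.
move=> i; rewrite size_mkseq => Hi; rewrite nth_mkseq // nth_nseq Hi.
set j := m * k - n.
have Ej : i + m * k = (i + j) + n by rewrite /j -addnA subnK // ltnW.
have Hc : coord x (i + m * k) = coord x (i + j) by rewrite /coord Ej modnDr.
rewrite Hc big_all_cond.
case E: (coord x (i + j)) => //=.
apply/negP => /allP /(_ j).
have jin : j \in index_iota 1 (m * k).
  rewrite mem_index_iota /j; apply/andP; split.
  - by rewrite subn_gt0.
  - by rewrite ltn_subrL n1 (leq_ltn_trans _ nmk).
move=> /(_ jin) /=; rewrite E implybF.
have : ~~ (m %| j).
  apply: contra mn => mj.
  have -> : n = m * k - j by rewrite /j subKn // ltnW.
  by rewrite dvdn_sub // dvdn_mulr.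
by move=> ->.
Qed.
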